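(* Let $k\ge 3$ and $n_1,\dots,n_k\ge 2$. The LC orbit of the complete $k$-partite graph $K_{n_1,\dots,n_k}$ has size $$|\mathcal{O}(K_{n_1,\dots,n_k})|=\sum_{\substack{I\subseteq[k]\\ |I|\text{ even}}}\prod_{i\in I}n_i+\sum_{j=1}^k\prod_{i\in[k]\setminus\{j\}}(n_i+1),$$ where $[k]=\{1,\dots,k\}$ and the empty product equals $1$ (equivalently, the first sum consists of the terms of the full expansion of $\prod_{i=1}^k(n_i+1)$ that are products of an even number of the $n_i$).
   Context: $K_{n_1,\dots,n_k}$ has vertex set $U_1\sqcup\cdots\sqcup U_k$ with $|U_i|=n_i$ and edges exactly between vertices in different parts. The local complement $c_v(G)$ complements the edges among the neighbours of $v$. $\mathcal{O}(G)$ is the set of all graphs on the labelled vertex set $V(G)$ obtainable from $G$ by finite sequences of local complements (labelled graphs are counted). *)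

(* Defs.v *)
From mathcomp Require Import all_boot.
Set Implicit Arguments. Unset Strict Implicit. Unset Printing Implicit Defensive.

(* A simple graph on a labelled finite vertex set V is represented by its
   (symmetric, irreflexive) set of ordered adjacent pairs. *)
Definition graph (V : finType) := {set V * V}.

Definition lc (V : finType) (v : V) (G : graph V) : graph V :=
  [set p | if [&& p.1 != p.2, (v, p.1) \in G & (v, p.2) \in G]
           then p \notin G else p \in G].

Definition lc_step (V : finType) : rel (graph V) :=
  fun G H => [exists v : V, H == lc v G].

Definition lc_orbit (V : finType) (G : graph V) : {set graph V} :=
  [set H | connect (@lc_step V) G H].

Definition kpart_vertex (k : nat) (n : 'I_k -> nat) : finType :=
  {i : 'I_k & 'I_(n i)}.

Definition complete_multipartite (k : nat) (n : 'I_k -> nat)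
  : graph (kpart_vertex n) :=
  [set p | tag p.1 != tag p.2].

(* Main.v *)
Require Import Defs.
From mathcomp Require Import all_boot zify.
Set Implicit Arguments. Unset Strict Implicit. Unset Printing Implicit Defensive.


Definition adjAb (pxy sx sy ix iy : bool) := if pxy then sx (+) sy else (~~ ix || sx) && (~~ iy || sy).
Definition adjBb (pxy jx jy o sx sy ix iy : bool) :=
  if pxy then (if jx then o else sx (+) sy (+) ~~ ix)
  else if jx then ~~ iy || sy else if jy then ~~ ix || sx else false.
Definition lcb (ax ay old : bool) := if ax && ay then ~~ old else old.

Definition chk (F : bool -> bool) := F true && F false.
Lemma chkP F : chk F -> forall b, F b. Proof. by case/andP => ? ? []. Qed.

Definition consA px py pxy sx sy sv ix iy iv xv yv :=
 [&& px && py ==> pxy, pxy && px ==> py, pxy && py ==> px, xv ==> px,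
     xv ==> (sx == sv), xv ==> (ix == iv), yv ==> py, yv ==> (sy == sv), yv ==> (iy == iv),
     ~~ (xv && yv), sx ==> ix, sy ==> iy, sv ==> iv, pxy ==> (ix == iy), px ==> (ix == iv),
     py ==> (iy == iv), ~~ [&& sx, sy & pxy], [&& sx, sv & px] ==> xv & [&& sy, sv & py] ==> yv].

Definition consB pxy px py ix iy iv jx jy jv :=
 [&& jx && jy ==> pxy, pxy && jx ==> jy, pxy && jy ==> jx, jx && jv ==> px, px && jx ==> jv,
     px && jv ==> jx, py && jy ==> jv, py && jv ==> jy, jy && jv ==> py, jx ==> ~~ ix,
     jy ==> ~~ iy & jv ==> ~~ iv].

Definition FA1 px py pxy sx sy sv ix iy iv xv yv :=
  consA px py pxy sx sy sv ix iy iv xv yv ==> (iv && ~~ sv) ==>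
  (lcb (~~ xv && adjAb px sv sx iv ix) (~~ yv && adjAb py sv sy iv iy) (adjAb pxy sx sy ix iy)
   == adjAb pxy sx sy ix iy).

Definition FA2 px py pxy sx sy sv ix iy iv xv yv o :=
  consA px py pxy sx sy sv ix iy iv xv yv ==> ~~ o ==> ~~ (iv && ~~ sv) ==>
  (lcb (~~ xv && adjAb px sv sx iv ix) (~~ yv && adjAb py sv sy iv iy) (adjAb pxy sx sy ix iy)
   == adjBb pxy px py (o (+) iv (+) false) (if px then false else sx) (if py then false else sy)
        (if px then false else ix) (if py then false else iy)).

Definition lcB px py pxy sx sy sv ix iy iv xv yv jx jy jv o :=
  lcb (~~ xv && adjBb px jv jx o sv sx iv ix) (~~ yv && adjBb py jv jy o sv sy iv iy)
      (adjBb pxy jx jy o sx sy ix iy).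

Definition FB1 px py pxy sx sy sv ix iy iv xv yv jx jy jv o :=
  consA px py pxy sx sy sv ix iy iv xv yv ==> consB pxy px py ix iy iv jx jy jv ==> jv ==>
  (lcB px py pxy sx sy sv ix iy iv xv yv jx jy jv o
   == adjAb pxy (if px then o && xv else sx) (if py then o && yv else sy)
        (if px then o else ix) (if py then o else iy)).

Definition FB2 px py pxy sx sy sv ix iy iv xv yv jx jy jv o :=
  consA px py pxy sx sy sv ix iy iv xv yv ==> consB pxy px py ix iy iv jx jy jv ==> ~~ jv ==> sv ==>
  (lcB px py pxy sx sy sv ix iy iv xv yv jx jy jv o
   == adjBb pxy jx jy (o (+) iv (+) false) (if px then false else sx) (if py then false else sy)
        (if px then false else ix) (if py then false else iy)).

Definition FB3 px py pxy sx sy sv ix iy iv xv yv jx jy jv o :=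
  consA px py pxy sx sy sv ix iy iv xv yv ==> consB pxy px py ix iy iv jx jy jv ==> ~~ jv ==>
  ~~ sv ==> iv ==>
  (lcB px py pxy sx sy sv ix iy iv xv yv jx jy jv o == adjBb pxy jx jy o sx sy ix iy).

Definition FB4 px py pxy sx sy sv ix iy iv xv yv jx jy jv o :=
  consA px py pxy sx sy sv ix iy iv xv yv ==> consB pxy px py ix iy iv jx jy jv ==> ~~ jv ==>
  ~~ sv ==> ~~ iv ==>
  (lcB px py pxy sx sy sv ix iy iv xv yv jx jy jv o
   == adjBb pxy jx jy (o (+) iv (+) true) (if px then xv else sx) (if py then yv else sy)
        (if px then true else ix) (if py then true else iy)).

Definition all11 (F : bool -> bool -> bool -> bool -> bool -> bool -> bool -> bool -> bool -> bool -> bool -> bool) :=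
  chk (fun a => chk (fun b => chk (fun c => chk (fun d => chk (fun e => chk (fun f =>
  chk (fun g => chk (fun h => chk (fun i => chk (fun j => chk (fun l => F a b c d e f g h i j l))))))))))).

Lemma all11P F : all11 F -> forall a b c d e f g h i j l, F a b c d e f g h i j l.
Proof.
move=> H a b c d e f g h i j l; move: H; rewrite /all11.
move=> /chkP/(_ a) /chkP/(_ b) /chkP/(_ c) /chkP/(_ d) /chkP/(_ e) /chkP/(_ f).
by move=> /chkP/(_ g) /chkP/(_ h) /chkP/(_ i) /chkP/(_ j) /chkP/(_ l).
Qed.

Lemma tabA1 : forall a b c d e f g h i j l, FA1 a b c d e f g h i j l.
Proof. apply: all11P. by vm_compute. Qed.

Lemma tabA2 : forall a b c d e f g h i j l o, FA2 a b c d e f g h i j l o.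
Proof. move=> a b c d e f g h i j l; apply: chkP; move: a b c d e f g h i j l.
apply: (@all11P (fun a b c d e f g h i j l => chk (FA2 a b c d e f g h i j l))). by vm_compute. Qed.

Definition all4 (F : bool -> bool -> bool -> bool -> bool) :=
  chk (fun a => chk (fun b => chk (fun c => chk (fun d => F a b c d)))).
Lemma all4P F : all4 F -> forall a b c d, F a b c d.
Proof. by move=> H a b c d; move: H; rewrite /all4 => /chkP/(_ a) /chkP/(_ b) /chkP/(_ c) /chkP/(_ d). Qed.

Definition tabBgen (G : bool -> bool -> bool -> bool -> bool -> bool -> bool -> bool -> bool -> bool -> bool -> bool -> bool -> bool -> bool -> bool) :=
  all11 (fun a b c d e f g h i j l => all4 (G a b c d e f g h i j l)).

Lemma tabBgenP G : tabBgen G -> forall a b c d e f g h i j l m p q r, G a b c d e f g h i j l m p q r.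
Proof. move=> H a b c d e f g h i j l; apply: all4P; exact: all11P H a b c d e f g h i j l. Qed.

Lemma tabB1 : forall a b c d e f g h i j l m p q r, FB1 a b c d e f g h i j l m p q r.
Proof. apply: tabBgenP; by vm_compute. Qed.
Lemma tabB2 : forall a b c d e f g h i j l m p q r, FB2 a b c d e f g h i j l m p q r.
Proof. apply: tabBgenP; by vm_compute. Qed.
Lemma tabB3 : forall a b c d e f g h i j l m p q r, FB3 a b c d e f g h i j l m p q r.
Proof. apply: tabBgenP; by vm_compute. Qed.
Lemma tabB4 : forall a b c d e f g h i j l m p q r, FB4 a b c d e f g h i j l m p q r.
Proof. apply: tabBgenP; by vm_compute. Qed.


Section Main.
Variables (k : nat) (n : 'I_k -> nat).
Local Notation V := (kpart_vertex n).
Local Notation FF := {ffun 'I_k -> option V}.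
Definition data := (option 'I_k * FF)%type.

Definition sv (f : FF) (x : V) := f (tag x) == Some x.
Definition iv (f : FF) (x : V) := f (tag x) != None.
Definition supp (f : FF) := [set i | f i != None].
Definition adj (d : data) (x y : V) : bool :=
  match d.1 with
  | None => adjAb (tag x == tag y) (sv d.2 x) (sv d.2 y) (iv d.2 x) (iv d.2 y)
  | Some j => adjBb (tag x == tag y) (j == tag x) (j == tag y) (odd #|supp d.2|)
                (sv d.2 x) (sv d.2 y) (iv d.2 x) (iv d.2 y)
  end.
Definition dec (d : data) : graph V := [set p | (p.1 != p.2) && adj d p.1 p.2].
Definition upd (f : FF) i (o : option V) : FF := [ffun l => if i == l then o else f l].
Definition wf (f : FF) := [forall i, if f i is Some x then tag x == i else true].
Definition valid (d : data) :=
  wf d.2 && (if d.1 is Some j then d.2 j == None else ~~ odd #|supp d.2|).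
Definition step (d : data) (v : V) : data :=
  match d.1 with
  | None => if iv d.2 v && ~~ sv d.2 v then d else (Some (tag v), upd d.2 (tag v) None)
  | Some j => if j == tag v then (None, upd d.2 (tag v) (if odd #|supp d.2| then Some v else None))
              else if sv d.2 v then (Some j, upd d.2 (tag v) None)
              else if iv d.2 v then d else (Some j, upd d.2 (tag v) (Some v))
  end.

Lemma sv_upd0 f i x : sv (upd f i None) x = if i == tag x then false else sv f x.
Proof. by rewrite /sv ffunE; case: ifP. Qed.
Lemma sv_upd1 f i v x : sv (upd f i (Some v)) x = if i == tag x then v == x else sv f x.
Proof. by rewrite /sv ffunE; case: ifP => // _; apply/eqP/eqP => [[]|->]. Qed.
Lemma iv_upd0 f i x : iv (upd f i None) x = if i == tag x then false else iv f x.
Proof. by rewrite /iv ffunE; case: ifP. Qed.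
Lemma iv_upd1 f i v x : iv (upd f i (Some v)) x = if i == tag x then true else iv f x.
Proof. by rewrite /iv ffunE; case: ifP. Qed.

Lemma sv_updb f i (b : bool) v x :
  sv (upd f i (if b then Some v else None)) x = if i == tag x then b && (v == x) else sv f x.
Proof. by case: b; rewrite ?sv_upd1 ?sv_upd0. Qed.
Lemma iv_updb f i (b : bool) v x :
  iv (upd f i (if b then Some v else None)) x = if i == tag x then b else iv f x.
Proof. by case: b; rewrite ?iv_upd1 ?iv_upd0. Qed.

Lemma odd_supp_upd f i o :
  odd #|supp (upd f i o)| = odd #|supp f| (+) (f i != None) (+) (o != None).
Proof.
rewrite [#|supp f|](cardsD1 i) [#|supp (upd f i o)|](cardsD1 i).
have -> : supp (upd f i o) :\ i = supp f :\ i.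
  by apply/setP=> l; rewrite !inE ffunE; case: (eqVneq l i) => [->|/negbTE hl]; rewrite ?eqxx // eq_sym hl.
rewrite !inE ffunE eqxx !oddD.
by case: (f i != None); case: (o != None); case: (odd #|supp f :\ i|).
Qed.

Lemma consA_ok f v x y : x != y ->
  consA (tag v == tag x) (tag v == tag y) (tag x == tag y) (sv f x) (sv f y) (sv f v)
        (iv f x) (iv f y) (iv f v) (v == x) (v == y).
Proof.
move=> hxy; rewrite /consA.
have E3 (a b c : 'I_k) : [&& (a == b) && (a == c) ==> (b == c), (b == c) && (a == b) ==> (a == c)
     & (b == c) && (a == c) ==> (a == b)].
  by apply/and3P; split; apply/implyP => /andP [/eqP -> /eqP ->].
have Hs a : sv f a ==> iv f a by apply/implyP; rewrite /sv /iv => /eqP ->.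
have Hi a b : (tag a == tag b) ==> (iv f a == iv f b) by apply/implyP; rewrite /iv => /eqP ->.
have Hu a b : [&& sv f b, sv f a & tag a == tag b] ==> (a == b).
  apply/implyP; rewrite /sv => /and3P [/eqP hb /eqP ha /eqP hab]. by move: ha; rewrite hab hb => -[->].
have Hxy : ~~ [&& sv f x, sv f y & tag x == tag y].
  apply/negP => /and3P [hx hy ht]; move: (Hu y x); rewrite hx hy eq_sym ht /= => /eqP hyx.
  by rewrite hyx eqxx in hxy.
case/and3P: (E3 (tag v) (tag x) (tag y)) => -> -> ->.
have Hi' a b : (tag a == tag b) ==> (iv f b == iv f a) by apply/implyP; rewrite /iv => /eqP ->.
rewrite !Hs (Hi x y) (Hi' v x) (Hi' v y) (Hu v x) (Hu v y) Hxy.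
case: (eqVneq v x) => [?|hvx]; case: (eqVneq v y) => [?|hvy]; subst; rewrite ?eqxx //=.
all: try by rewrite eqxx in hxy.
Qed.

Lemma consB_ok (f : FF) (j : 'I_k) (v x y : V) : f j == None ->
  consB (tag x == tag y) (tag v == tag x) (tag v == tag y) (iv f x) (iv f y) (iv f v)
        (j == tag x) (j == tag y) (j == tag v).
Proof.
move=> hj; rewrite /consB.
have E3 (a b c : 'I_k) : [&& (a == b) && (a == c) ==> (b == c), (b == c) && (a == b) ==> (a == c)
     & (b == c) && (a == c) ==> (a == b)].
  by apply/and3P; split; apply/implyP => /andP [/eqP -> /eqP ->].
have Hj a : (j == tag a) ==> ~~ iv f a by apply/implyP; rewrite /iv => /eqP <-; rewrite negbK.
rewrite !Hj.
move: (E3 j (tag x) (tag y)) (E3 j (tag v) (tag x)) (E3 j (tag v) (tag y)) (E3 (tag v) (tag x) (tag y)).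
move: (j == tag x) (j == tag y) (j == tag v) (tag v == tag x) (tag v == tag y) (tag x == tag y).
by do 6!case.
Qed.

Lemma imp (a b : bool) : a ==> b -> a -> b. Proof. by case: a. Qed.

Lemma lc_dec d v : valid d -> lc v (dec d) = dec (step d v).
Proof.
case: d => [kd f]; rewrite /valid /= => /andP [wff hv].
apply/setP => [[x y]]; rewrite /lc !inE /=.
case: (eqVneq x y) => [<-|hxy]; first by [].
rewrite /=.
have cA := consA_ok f v hxy.
case: kd hv => [j|] /= hv.
- have cB := consB_ok v x y hv.
  have [hjv|hjv] := boolP (j == tag v).
    have -> : step (Some j, f) v = (None, upd f (tag v) (if odd #|supp f| then Some v else None)).
      by rewrite /step /= hjv.
    rewrite [adj (None, _) x y]/adj /=.
    rewrite !sv_updb !iv_updb; apply/eqP.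
    exact: (imp (imp (imp (tabB1 (tag v == tag x) (tag v == tag y) (tag x == tag y) (sv f x) (sv f y) (sv f v)
      (iv f x) (iv f y) (iv f v) (v == x) (v == y) (j == tag x) (j == tag y) (j == tag v) (odd #|supp f|)) cA) cB) hjv).
  have [hs|hs] := boolP (sv f v).
    have -> : step (Some j, f) v = (Some j, upd f (tag v) None).
      by rewrite /step /= (negbTE hjv) hs.
    rewrite [adj (Some j, upd _ _ _) x y]/adj /= !sv_upd0 !iv_upd0 odd_supp_upd; apply/eqP.
    exact: (imp (imp (imp (imp (tabB2 (tag v == tag x) (tag v == tag y) (tag x == tag y) (sv f x) (sv f y) (sv f v)
      (iv f x) (iv f y) (iv f v) (v == x) (v == y) (j == tag x) (j == tag y) (j == tag v) (odd #|supp f|)) cA) cB) hjv) hs).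
  have [hi|hi] := boolP (iv f v).
    have -> : step (Some j, f) v = (Some j, f).
      by rewrite /step /= (negbTE hjv) (negbTE hs) hi.
    apply/eqP.
    exact: (imp (imp (imp (imp (imp (tabB3 (tag v == tag x) (tag v == tag y) (tag x == tag y) (sv f x) (sv f y) (sv f v)
      (iv f x) (iv f y) (iv f v) (v == x) (v == y) (j == tag x) (j == tag y) (j == tag v) (odd #|supp f|)) cA) cB) hjv) hs) hi).
  have -> : step (Some j, f) v = (Some j, upd f (tag v) (Some v)).
    by rewrite /step /= (negbTE hjv) (negbTE hs) (negbTE hi).
  rewrite [adj (Some j, upd _ _ _) x y]/adj /= !sv_upd1 !iv_upd1 odd_supp_upd; apply/eqP.
  exact: (imp (imp (imp (imp (imp (tabB4 (tag v == tag x) (tag v == tag y) (tag x == tag y) (sv f x) (sv f y) (sv f v)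
    (iv f x) (iv f y) (iv f v) (v == x) (v == y) (j == tag x) (j == tag y) (j == tag v) (odd #|supp f|)) cA) cB) hjv) hs) hi).
- have [hc|hc] := boolP (iv f v && ~~ sv f v).
    have -> : step (None, f) v = (None, f) by rewrite /step /= hc.
    apply/eqP.
    exact: (imp (imp (tabA1 (tag v == tag x) (tag v == tag y) (tag x == tag y) (sv f x) (sv f y) (sv f v)
      (iv f x) (iv f y) (iv f v) (v == x) (v == y)) cA) hc).
  have -> : step (None, f) v = (Some (tag v), upd f (tag v) None) by rewrite /step /= (negbTE hc).
  rewrite [adj (Some _, upd _ _ _) x y]/adj /= !sv_upd0 !iv_upd0 odd_supp_upd; apply/eqP.
  exact: (imp (imp (imp (tabA2 (tag v == tag x) (tag v == tag y) (tag x == tag y) (sv f x) (sv f y) (sv f v)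
    (iv f x) (iv f y) (iv f v) (v == x) (v == y) (odd #|supp f|)) cA) hv) hc).
Qed.

Lemma wf_upd f i (o : option V) : wf f -> (if o is Some x then tag x == i else true) -> wf (upd f i o).
Proof.
move=> /forallP wff ho; apply/forallP => l; rewrite ffunE.
by case: (eqVneq i l) => [<-|_] //; exact: wff.
Qed.

Lemma valid_step d v : valid d -> valid (step d v).
Proof.
case: d => [[j|] f]; rewrite /valid /step /= => /andP [wff hv].
- case: (eqVneq j (tag v)) => [ejv|njv] /=.
    apply/andP; split.
      by apply: wf_upd => //; case: (odd _); rewrite /= ?eqxx.
    rewrite odd_supp_upd -ejv (eqP hv) /=.
    by case: (odd _).
  case: ifP => hs; [|case: ifP => hi].
  + by rewrite wf_upd //= ffunE; case: ifP.
  + by rewrite wff.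
  + rewrite wf_upd //= ?eqxx // ffunE.
    by rewrite eq_sym in njv; rewrite (negbTE njv).
- case: ifP => hc; first by rewrite /= wff.
  by rewrite /= wf_upd //= ffunE eqxx.
Qed.

Definition f0 : FF := [ffun => None].
Definition d0 : data := (None, f0).
Definition Valid : {set data} := [set d | valid d].

Lemma valid_d0 : valid d0.
Proof.
rewrite /valid /=; apply/andP; split; first by apply/forallP => i; rewrite ffunE.
have -> : supp f0 = set0 by apply/setP => i; rewrite !inE ffunE.
by rewrite cards0.
Qed.

Lemma dec_d0 : dec d0 = complete_multipartite n.
Proof.
apply/setP => [[x y]]; rewrite !inE /adj /= /adjAb /sv /iv !ffunE /=.
case: (eqVneq (tag x) (tag y)) => [_|h] /=; first by rewrite andbF.
rewrite andbT; apply/eqP => exy; by rewrite exy eqxx in h.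
Qed.

Lemma conn_step d v : valid d -> connect (@lc_step V) (dec d) (dec (step d v)).
Proof. by move=> hd; apply: connect1; apply/existsP; exists v; rewrite lc_dec. Qed.

Lemma supp0 f : supp f = set0 -> f = f0.
Proof.
move=> h; apply/ffunP => i; rewrite ffunE.
have : i \notin supp f by rewrite h inE.
by rewrite inE negbK => /eqP.
Qed.

Lemma wfP f i x : wf f -> f i = Some x -> tag x = i.
Proof. by move=> /forallP /(_ i) + e; rewrite e => /eqP. Qed.

Section Reach.
Hypothesis hn : forall i, 1 < n i.
Definition o0 i : 'I_(n i) := Ordinal (ltnW (hn i)).
Definition o1 i : 'I_(n i) := Ordinal (hn i).
Definition vtx i (a : 'I_(n i)) : V := existT _ i a.

Lemma reachB0 j : connect (@lc_step V) (dec d0) (dec (Some j, f0)).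
Proof.
have -> : (Some j, f0) = step d0 (vtx (o0 j)).
  rewrite /step /= /iv ffunE /=; congr pair; apply/ffunP => i; rewrite !ffunE.
  by case: ifP.
exact: conn_step valid_d0.
Qed.

Lemma reachB j m f : #|supp f| <= m -> valid (Some j, f) ->
  connect (@lc_step V) (dec d0) (dec (Some j, f)).
Proof.
elim: m f => [|m IH] f hm hv.
  have -> : f = f0 by apply: supp0; apply/eqP; rewrite -cards_eq0 -leqn0.
  exact: reachB0.
case: (set_0Vmem (supp f)) => [e|[i hi]].
  by rewrite (supp0 e); exact: reachB0.
move: hv; rewrite /valid /= => /andP [wff hj].
case e: (f i) => [x|]; last by move: hi; rewrite inE e.
have tx := wfP wff e.
have hji : j != i by apply/eqP => eji; move: hj; rewrite eji e.
set g := upd f i None.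
have hvg : valid (Some j, g).
  rewrite /valid /= wf_upd //= ffunE.
  by rewrite eq_sym in hji; rewrite (negbTE hji).
have hsg : #|supp g| <= m.
  have : #|supp f| = #|supp g|.+1.
    rewrite (cardsD1 i) hi; congr (_.+1); apply: eq_card => l.
    rewrite !inE ffunE; case: (eqVneq i l) => [<-|]; first by rewrite eqxx.
    by [].
  by move=> e2; move: hm; rewrite e2.
apply: connect_trans (IH g hsg hvg) _.
have -> : (Some j, f) = step (Some j, g) x.
  rewrite /step /= tx (negbTE hji) sv_upd0 iv_upd0 tx eqxx /=.
  congr pair; apply/ffunP => l; rewrite !ffunE.
  by case: (eqVneq i l) => [<-|] //; rewrite e.
exact: conn_step hvg.
Qed.

Lemma reachA f : valid (None, f) -> connect (@lc_step V) (dec d0) (dec (None, f)).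
Proof.
move=> hv.
case: (set_0Vmem (supp f)) => [e|[i hi]].
  by rewrite (supp0 e); exact: connect0.
move: hv; rewrite /valid /= => /andP [wff ho].
case e: (f i) => [x|]; last by move: hi; rewrite inE e.
have tx := wfP wff e.
set g := upd f i None.
have hvg : valid (Some i, g).
  by rewrite /valid /= wf_upd //= ffunE eqxx.
apply: connect_trans (reachB (leqnn _) hvg) _.
have -> : (None, f) = step (Some i, g) x.
  rewrite /step /= tx eqxx odd_supp_upd e (negbTE ho) /=.
  congr pair; apply/ffunP => l; rewrite !ffunE.
  by case: (eqVneq i l) => [<-|] //; rewrite e.
exact: conn_step hvg.
Qed.

Lemma reach d : valid d -> connect (@lc_step V) (dec d0) (dec d).
Proof. by case: d => [[j|] f] hv; [exact: reachB (leqnn _) hv | exact: reachA]. Qed.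

Lemma orbit_eq : lc_orbit (complete_multipartite n) = dec @: Valid.
Proof.
apply/setP => H; rewrite inE -dec_d0; apply/idP/imsetP.
  move/connectP => [p hp ->].
  elim: p d0 valid_d0 hp => [|G p IH] d hd /=; first by exists d; rewrite ?inE.
  case/andP => /existsP [v /eqP ->] hp.
  rewrite lc_dec // in hp *.
  exact: IH (valid_step v hd) hp.
by case => d; rewrite inE => hd ->; exact: reach.
Qed.

Hypothesis hk : 2 < k.

Lemma other (a b : 'I_k) : exists c : 'I_k, (c != a) && (c != b).
Proof.
have h0 : 0 < k by lia.
have h1 : 1 < k by lia.
have [E0|E0] := boolP ((Ordinal h0 != a) && (Ordinal h0 != b)); first by exists (Ordinal h0).
have [E1|E1] := boolP ((Ordinal h1 != a) && (Ordinal h1 != b)); first by exists (Ordinal h1).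
exists (Ordinal hk); move: E0 E1; rewrite -!val_eqE /=.
case: a b => [a ha] [b hb] /=; lia.
Qed.

Lemma other_vtx (x : V) : exists y : V, (tag y == tag x) && (y != x).
Proof.
case: x => i a.
exists (vtx (if a == o0 i then o1 i else o0 i)); rewrite /vtx /= eqxx /=.
rewrite -tag_eqE /tag_eq /= eqxx /= tagged_asE.
case: (eqVneq a (o0 i)) => [->|h]; last by rewrite eq_sym.
by rewrite /o0 /o1 -val_eqE /=.
Qed.

Lemma tv_vtx f i : wf f -> exists w : V, (tag w == i) && (~~ iv f w || sv f w).
Proof.
move=> wff; case e: (f i) => [x|].
  have tx := wfP wff e; exists x; rewrite tx eqxx /= /sv tx e eqxx.
  by rewrite orbT.
exists (vtx (o0 i)); rewrite /= eqxx /= /iv /= e.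
by [].
Qed.

Lemma adj_eq d1 d2 : dec d1 = dec d2 -> forall x y, x != y -> adj d1 x y = adj d2 x y.
Proof. by move=> E x y hxy; move/setP: E => /(_ (x, y)); rewrite !inE /= hxy. Qed.

Lemma sv_transfer kd f1 f2 : valid (kd, f1) -> valid (kd, f2) -> dec (kd, f1) = dec (kd, f2) ->
  forall x, sv f1 x -> sv f2 x.
Proof.
rewrite /valid /= => /andP [wf1 h1] /andP [wf2 h2] E x s1.
have A := adj_eq E.
apply/negPn/negP => s2.
have [y /andP [/eqP ty yx]] := other_vtx x.
have sy1 : sv f1 y = false.
  apply/negbTE; move: s1; rewrite /sv ty => /eqP ->.
  by apply/negP => /eqP [] /eqP; rewrite eq_sym (negbTE yx).
have ix1 : iv f1 x by move: s1; rewrite /sv /iv => /eqP ->.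
case: kd h1 h2 E A => [j|] h1 h2 E A.
- have hjx : j != tag x by apply/eqP => ejx; move: h1; rewrite ejx; move: s1 => /eqP ->.
  set z := vtx (o0 j); have tz : tag z = j by [].
  case ix2: (iv f2 x).
    have hzx : z != x by apply/eqP => ezx; rewrite -ezx tz eqxx in hjx.
    have := A z x hzx; rewrite /adj /= /adjBb ?tz ?(negbTE hjx) ?eqxx ?ix1 ?ix2 ?s1 ?(negbTE s2) /=.
    by [].
  have iy2 : iv f2 y = false by rewrite /iv ty.
  have iy1 : iv f1 y by rewrite /iv ty.
  have hzy : z != y by apply/eqP => ezy; move: ty; rewrite -ezy tz => ejx; rewrite ejx eqxx in hjx.
  have := A z y hzy; rewrite /adj /= /adjBb ?tz ?ty ?(negbTE hjx) ?eqxx ?iy1 ?iy2 ?sy1 /=.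
  by [].
- case ix2: (iv f2 x).
    have [c /andP [hc _]] := other (tag x) (tag x).
    have [z /andP [/eqP tz tvz]] := tv_vtx c wf1.
    have hzx : x != z by apply/eqP => exz; move: tz; rewrite -exz => ecx; rewrite ecx eqxx in hc.
    have := A x z hzx; rewrite /adj /= /adjAb tz (eq_sym (tag x)) (negbTE hc) tvz ix2 (negbTE s2) s1 ix1 /=.
    by [].
  have hxy : x != y by rewrite eq_sym.
  have := A x y hxy; rewrite /adj /= /adjAb ty eqxx s1 sy1 (negbTE s2) /=.
  by rewrite /sv ty; move: ix2; rewrite /iv => /negbFE /eqP ->.
Qed.

Lemma kind_eq k1 f1 k2 f2 : valid (k1, f1) -> valid (k2, f2) -> dec (k1, f1) = dec (k2, f2) -> k1 = k2.
Proof.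
rewrite /valid /= => /andP [wf1 h1] /andP [wf2 h2] E.
have A := adj_eq E.
have hAB j (g1 g2 : FF) : wf g2 -> (forall x y, x != y -> adj (Some j, g1) x y = adj (None, g2) x y) -> False.
  move=> wg A'.
  have [c /andP [hc _]] := other j j.
  have [c' /andP [hc'1 hc'2]] := other j c.
  have [y /andP [/eqP ty tvy]] := tv_vtx c wg.
  have [z /andP [/eqP tz tvz]] := tv_vtx c' wg.
  have hyz : y != z by apply/eqP => eyz; move: ty; rewrite eyz tz => ecc; rewrite ecc eqxx in hc'2.
  have := A' y z hyz; rewrite /adj /= /adjAb /adjBb ty tz tvy tvz.
  rewrite (eq_sym c) (negbTE hc'2) (eq_sym j) (negbTE hc) (eq_sym j) (negbTE hc'1).
  by [].
case: k1 h1 A E => [j1|] h1 A E; case: k2 h2 A E => [j2|] h2 A E //.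
- case: (eqVneq j1 j2) => [->//|hne].
  have [c /andP [hc1 hc2]] := other j1 j2.
  set z := vtx (o0 j1); have tz : tag z = j1 by [].
  have [y /andP [/eqP ty tvy]] := tv_vtx c wf1.
  have hzy : z != y by apply/eqP => ezy; move: ty; rewrite -ezy tz => ejc; rewrite ejc eqxx in hc1.
  have := A z y hzy; rewrite /adj /= /adjBb ?tz ty tvy.
  rewrite (eq_sym j1 c) (negbTE hc1) eqxx (eq_sym j2 c) (negbTE hc2) (eq_sym j2 j1) (negbTE hne).
  by [].
- by exfalso; apply: (hAB j1 f1 f2 wf2) => x y hxy; exact: A.
- by exfalso; apply: (hAB j2 f2 f1 wf1) => x y hxy; rewrite A.
Qed.

Lemma dec_inj : {in Valid &, injective dec}.
Proof.
move=> [k1 f1] [k2 f2]; rewrite !inE => hv1 hv2 E.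
have ek := kind_eq hv1 hv2 E; subst k2.
have t12 := sv_transfer hv1 hv2 E.
have t21 := sv_transfer hv2 hv1 (esym E).
move: hv1 hv2; rewrite /valid /= => /andP [wf1 _] /andP [wf2 _].
congr pair; apply/ffunP => i.
case e1: (f1 i) => [x|].
  have tx := wfP wf1 e1.
  have : sv f2 x by apply: t12; rewrite /sv tx e1.
  by rewrite /sv tx => /eqP.
case e2: (f2 i) => [y|] //.
have ty := wfP wf2 e2.
have : sv f1 y by apply: t21; rewrite /sv ty e2.
by rewrite /sv ty e1.
Qed.

Lemma card_as_sum (T : finType) (P : pred T) : #|P| = \sum_(x : T) P x.
Proof. by rewrite -sum1_card big_mkcond /=; apply: eq_bigr => x _; rewrite unfold_in; case: (P x). Qed.

Lemma sum_option (T : finType) (x0 : T) (G : option T -> nat) :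
  \sum_(o : option T) G o = G None + \sum_(x : T) G (Some x).
Proof.
rewrite (bigD1 None) //=; congr (_ + _).
rewrite (reindex_onto Some (odflt x0)) /=; last by case.
by apply: eq_bigl => x; rewrite eqxx.
Qed.

Lemma card_optpred (T : finType) (x0 : T) (b : bool) (Q : pred T) :
  #|[pred o : option T | if o is Some x then Q x else b]| = b + #|Q|.
Proof. by rewrite !card_as_sum (sum_option x0). Qed.

Lemma card_part i : #|[pred x : V | tag x == i]| = n i.
Proof.
transitivity #|[set vtx a | a : 'I_(n i)]|.
  apply: eq_card => x; rewrite !inE; case: x => j a /=.
  apply/idP/imsetP => [/eqP ej | [b _ e]].
    by subst j; exists a.
  by move: (f_equal tag e) => /= ->.
rewrite card_imset; first by rewrite card_ord.
by move=> a b /eqP; rewrite -tag_eqE /tag_eq /= eqxx tagged_asE => /eqP.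
Qed.

Lemma cardB j : #|[set f : FF | valid (Some j, f)]| = \prod_(i < k | i != j) (n i).+1.
Proof.
pose F := fun i : 'I_k => if i == j then [pred o : option V | if o is Some x then false else true]
  else [pred o : option V | if o is Some x then tag x == i else true].
have -> : #|[set f : FF | valid (Some j, f)]| = #|(family F : simpl_pred FF)|.
  apply: eq_card => f; rewrite inE /valid /=; apply/andP/familyP => [[/forallP wff hj] i | H].
    rewrite /F; case: eqP => [->|_]; first by rewrite inE (eqP hj).
    by have := wff i; rewrite inE.
  split.
    apply/forallP => i; have := H i; rewrite /F; case: eqP => [->|_]; rewrite inE //.
    by case: (f j).
  by have := H j; rewrite /F eqxx inE; case: (f j).
rewrite card_family foldrE big_map big_enum /=.
rewrite (bigD1 j) //= /F eqxx (card_optpred (vtx (o0 j))) card0 /= mul1n.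
apply: eq_bigr => i hij; rewrite (negbTE hij) (card_optpred (vtx (o0 j))) card_part.
by rewrite add1n.
Qed.

Lemma cardA : #|[set f : FF | valid (None, f)]| = \sum_(I : {set 'I_k} | ~~ odd #|I|) \prod_(i in I) n i.
Proof.
rewrite -sum1_card (partition_big supp (fun I : {set 'I_k} => ~~ odd #|I|)) /=; last first.
  by move=> f; rewrite inE /valid /= => /andP [].
apply: eq_bigr => I hI.
pose G := fun i : 'I_k => if i \in I then [pred o : option V | if o is Some x then tag x == i else false]
  else [pred o : option V | if o is Some x then false else true].
transitivity #|(family G : simpl_pred FF)|.
  rewrite -sum1_card; apply: eq_bigl => f; rewrite !inE /valid /=.
  apply/andP/forallP => [[/andP [/forallP wff _] /eqP ES] i | H].
    rewrite /G -ES !inE; have := wff i; case e: (f i) => [x|] //=.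
  have ES : supp f = I.
    apply/setP => i; rewrite inE; have := H i; rewrite /G; case: (i \in I); rewrite inE;
      by case: (f i).
  split; last by rewrite ES.
  rewrite ES hI andbT; apply/forallP => i; have := H i; rewrite /G; case: (i \in I); rewrite inE;
    by case: (f i).
rewrite card_family foldrE big_map big_enum /= [RHS]big_mkcond /=.
apply: eq_bigr => i _; rewrite /G; case: (i \in I); rewrite (card_optpred (vtx (o0 i))) ?card_part //.
by rewrite card0.
Qed.

Lemma card_Valid : #|Valid| = \sum_(I : {set 'I_k} | ~~ odd #|I|) \prod_(i in I) n i
    + \sum_(j < k) \prod_(i < k | i != j) (n i).+1.
Proof.
have x0 : 'I_k by exact: Ordinal (ltnW (ltnW hk)).
rewrite -cardA; under eq_bigr => j _ do rewrite -cardB.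
transitivity (\sum_(p : data) (valid (p.1, p.2) : nat)).
  by rewrite -sum1_card big_mkcond; apply: eq_bigr => [[a b]] _; rewrite inE.
rewrite -(pair_bigA _ (fun a b => (valid (a, b) : nat))) /= (sum_option x0).
congr (_ + _); first by rewrite -sum1dep_card [RHS]big_mkcond; apply: eq_bigr => f _; case: (valid _).
by apply: eq_bigr => j _; rewrite -sum1dep_card [RHS]big_mkcond; apply: eq_bigr => f _; case: (valid _).
Qed.

Lemma main_count : #|lc_orbit (complete_multipartite n)| =
  \sum_(I : {set 'I_k} | ~~ odd #|I|) \prod_(i in I) n i
    + \sum_(j < k) \prod_(i < k | i != j) (n i).+1.
Proof. by rewrite orbit_eq card_in_imset; [exact: card_Valid | exact: dec_inj]. Qed.
End Reach.
End Main.

Unset Implicit Arguments.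
Theorem theorem7 (k : nat) (n : 'I_k -> nat) :
  3 <= k -> (forall i, 2 <= n i) ->
  #|lc_orbit (complete_multipartite n)| =
    \sum_(I : {set 'I_k} | ~~ odd #|I|) \prod_(i in I) n i
    + \sum_(j < k) \prod_(i < k | i != j) (n i).+1.
Proof. by move=> hk hn; exact: main_count. Qed.
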